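(* Let $A\to M$ be a vector bundle of rank at least $n$. Let $\widehat{\xi}^1,\dots,\widehat{\xi}^n\in\Gamma(A^* )$ be linearly independent over $C^\infty(M)$ and let $\widehat{X}_1,\dots,\widehat{X}_n\in\Gamma(\mathrm{CDO}(A))$ be covariant differential operators with symbols $\widehat{x}_1,\dots,\widehat{x}_n\in\Gamma(TM)$. Define the anchor $a_A:A\to TM$, the operator $\nabla^A:\Gamma(A)\times\Gamma(A)\to\Gamma(A)$ and the bracket $[\cdot,\cdot]_A$ on $\Gamma(A)$ by $$a_A(y)=\sum_{i=1}^n\langle y,\widehat{\xi}^i\rangle\,\widehat{x}_i,\qquad \nabla^A_y z=\sum_{i=1}^n\langle y,\widehat{\xi}^i\rangle\,\widehat{X}_i(z),\qquad [y,z]_A=\nabla^A_yz-\nabla^A_zy,$$ for $y,z\in\Gamma(A)$. Suppose there are functions $a_{ik}^j\in C^\infty(M)$ ($1\le i,j,k\le n$) such that for all $i,j$ $$\widehat{X}_i(\widehat{\xi}^j)=\sum_{k=1}^n a_{ik}^j\,\widehat{\xi}^k,\qquad [\widehat{X}_i,\widehat{X}_j]=\sum_{k=1}^n\big(a_{ji}^k-a_{ij}^k\big)\widehat{X}_k .$$ Then $R^{\nabla^A}(x,y)z=0$ for all $x,y,z\in\Gamma(A)$, and $(A,[\cdot,\cdot]_A,a_A)$ is a Lie algebroid.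
   Context: A covariant differential operator on $A$ is an $\mathbb{R}$-linear map $\widehat{X}:\Gamma(A)\to\Gamma(A)$ together with a vector field $\widehat{x}$ (its symbol) such that $\widehat{X}(fy)=f\widehat{X}(y)+\widehat{x}(f)\,y$ for all $f\in C^\infty(M)$, $y\in\Gamma(A)$. Such an operator acts on $\Gamma(A^* )$ by the dual action $\langle \widehat{X}(\xi),y\rangle=\widehat{x}\langle\xi,y\rangle-\langle\xi,\widehat{X}(y)\rangle$. The commutator $[\widehat{X},\widehat{Y}]=\widehat{X}\circ\widehat{Y}-\widehat{Y}\circ\widehat{X}$ of covariant differential operators is a covariant differential operator. For the operator $\nabla=\nabla^A$ the curvature is $R^{\nabla}(x,y)z=\nabla_x\nabla_yz-\nabla_y\nabla_xz-\nabla_{[x,y]_A}z$. A Lie algebroid $(A,[\cdot,\cdot]_A,a_A)$ is a vector bundle with a bundle map $a_A:A\to TM$ and an $\mathbb{R}$-bilinear skew-symmetric bracket on $\Gamma(A)$ satisfying $[x,fy]_A=f[x,y]_A+a_A(x)(f)\,y$ and the Jacobi identity. *)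

(* Defs.v *)
(* Algebraic (Serre--Swan) model of the smooth setting:
   K      : the real scalars (a field),
   R      : commutative K-algebra standing for C^oo(M),
   vector fields on M = K-linear derivations R -> R,
   V      : R-module standing for Gamma(A),
   Gamma(A^* ) = R-linear maps V -> R. *)
From HB Require Import structures.
From mathcomp Require Import all_boot all_order all_algebra.
Set Implicit Arguments. Unset Strict Implicit. Unset Printing Implicit Defensive.
Import Order.TTheory GRing.Theory.
Local Open Scope ring_scope.

Section Defs.
Variables (K : fieldType) (R : comAlgType K) (V : lmodType R).

Definition is_vfield (D : R -> R) : Prop :=
  (forall (k : K) (f g : R), D (k *: f + g) = k *: D f + D g) /\
  (forall f g : R, D (f * g) = f * D g + g * D f).

Definition is_dual_section (xi : V -> R) : Prop :=
  forall (f : R) (y z : V), xi (f *: y + z) = f * xi y + xi z.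

Definition is_cdo (X : V -> V) (xh : R -> R) : Prop :=
  [/\ is_vfield xh,
      (forall (k : K) (y z : V), X (k%:A *: y + z) = k%:A *: X y + X z) &
      (forall (f : R) (y : V), X (f *: y) = f *: X y + xh f *: y)].

Definition cdo_dual (X : V -> V) (xh : R -> R) (xi : V -> R) : V -> R :=
  fun y => xh (xi y) - xi (X y).

Definition cdo_comm (X Y : V -> V) : V -> V := fun z => X (Y z) - Y (X z).

Variable n : nat.
Variables (xi : 'I_n -> V -> R) (xh : 'I_n -> R -> R) (X : 'I_n -> V -> V).

Definition anchorA (y : V) : R -> R := fun f => \sum_(i < n) xi i y * xh i f.
Definition nablaA (y z : V) : V := \sum_(i < n) xi i y *: X i z.
Definition bracketA (y z : V) : V := nablaA y z - nablaA z y.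

End Defs.

Definition curvature (R : nzRingType) (V : lmodType R)
  (nab br : V -> V -> V) (x y z : V) : V :=
  nab x (nab y z) - nab y (nab x z) - nab (br x y) z.

Definition is_lie_algebroid (K : fieldType) (R : comAlgType K) (V : lmodType R)
  (br : V -> V -> V) (an : V -> R -> R) : Prop :=
      (forall y, is_vfield (an y)) /\
      (forall (f g : R) (y z : V), an (f *: y + z) g = f * an y g + an z g) /\
      (forall (k : K) (x y z : V), br (k%:A *: x + y) z = k%:A *: br x z + br y z) /\
      (forall (k : K) (x y z : V), br x (k%:A *: y + z) = k%:A *: br x y + br x z) /\
      (forall x y : V, br x y = - br y x) /\
      (forall (x y : V) (f : R), br x (f *: y) = f *: br x y + an x f *: y) /\
      (forall x y z : V, br x (br y z) + br y (br z x) + br z (br x y) = 0).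

(* Main.v *)
Require Import Defs.
From HB Require Import structures.
From mathcomp Require Import all_boot all_order all_algebra ring.
Import GRing.Theory.
Local Open Scope ring_scope.

Lemma L1 (V : zmodType) (a b c a' b' c' : V) :
  (a + b + c) - (a' + b' + c') - (b - b') = (a - a') + (c - c').
Proof.
rewrite !opprD !opprK !addrA.
rewrite [LHS](ACl ((1*4)*(3*6)*(2*7)*(5*8))) /= subrr addNr !addr0.
by rewrite addrA.
Qed.
Lemma L2 (V : zmodType) (P1 P2 P3 P4 P5 P6 D1 D3 D5 : V) :
  ((P1 - P2) - D1) + ((P3 - P4) - D3) + ((P5 - P6) - D5) =
  (P1 - P4 - D5) + (P3 - P6 - D1) + (P5 - P2 - D3).
Proof.
rewrite !addrA.
by rewrite [LHS](ACl (1*5*9*4*8*3*7*2*6)).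
Qed.

Theorem proposition2p11 (K : fieldType) (R : comAlgType K) (V : lmodType R)
  (n : nat) (xi : 'I_n -> V -> R) (X : 'I_n -> V -> V) (xh : 'I_n -> R -> R)
  (a : 'I_n -> 'I_n -> 'I_n -> R) :
  (forall i, is_dual_section (xi i)) ->
  (forall c : 'I_n -> R,
     (forall y : V, \sum_(i < n) c i * xi i y = 0) -> forall i, c i = 0) ->
  (forall i, is_cdo (X i) (xh i)) ->
  (forall i j (y : V),
     cdo_dual (X i) (xh i) (xi j) y = \sum_(k < n) a i k j * xi k y) ->
  (forall i j (z : V),
     cdo_comm (X i) (X j) z = \sum_(k < n) (a j i k - a i j k) *: X k z) ->
  (forall x y z : V,
     curvature (nablaA xi X) (bracketA xi X) x y z = 0) /\
  is_lie_algebroid (bracketA xi X) (anchorA xi xh).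
Proof.
move=> Hxi _ HX Hdual Hcomm.
have xi0 : forall j, xi j 0 = 0.
  move=> j; have h := Hxi j 1 0 0; rewrite scale1r addr0 mul1r in h.
  have : xi j 0 + xi j 0 - xi j 0 = xi j 0 - xi j 0 by rewrite -h.
  by rewrite addrK subrr.
have xiD : forall j y z, xi j (y + z) = xi j y + xi j z.
  by move=> j y z; rewrite -[y in LHS]scale1r Hxi mul1r.
have xiZ : forall j f y, xi j (f *: y) = f * xi j y.
  by move=> j f y; rewrite -[_ *: y]addr0 Hxi xi0 addr0.
have xiN : forall j y, xi j (- y) = - xi j y.
  by move=> j y; rewrite -scaleN1r xiZ mulN1r.
have xiB : forall j y z, xi j (y - z) = xi j y - xi j z.
  by move=> j y z; rewrite xiD xiN.
have xiS : forall j I r (P : pred I) (F : I -> V),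
    xi j (\sum_(i <- r | P i) F i) = \sum_(i <- r | P i) xi j (F i).
  by move=> j I r P F; apply: (big_morph (xi j) (xiD j) (xi0 j)).
have one : (1 : K)%:A = 1 :> R by rewrite scale1r.
have XD : forall i y z, X i (y + z) = X i y + X i z.
  move=> i y z; have [_ h _] := HX i; have := h 1 y z.
  by rewrite one !scale1r.
have X0 : forall i, X i 0 = 0.
  move=> i; have h := XD i 0 0; rewrite addr0 in h.
  have : X i 0 + X i 0 - X i 0 = X i 0 - X i 0 by rewrite -h.
  by rewrite addrK subrr.
have XZ : forall i f y, X i (f *: y) = f *: X i y + xh i f *: y.
  by move=> i; have [_ _ h] := HX i.
have XN : forall i y, X i (- y) = - X i y.
  move=> i y; have h := XD i y (- y); rewrite subrr X0 in h.
  by apply/eqP; rewrite -addr_eq0 addrC -h.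
have XB : forall i y z, X i (y - z) = X i y - X i z.
  by move=> i y z; rewrite XD XN.
have XS : forall i I r (P : pred I) (F : I -> V),
    X i (\sum_(k <- r | P k) F k) = \sum_(k <- r | P k) X i (F k).
  by move=> i I r P F; apply: (big_morph (X i) (XD i) (X0 i)).
have xhE : forall i j y, xh i (xi j y) = xi j (X i y) + \sum_(k < n) a i k j * xi k y.
  by move=> i j y; rewrite -Hdual /cdo_dual addrC subrK.
set N := nablaA xi X.
have NE : forall y z, N y z = \sum_(i < n) xi i y *: X i z by [].
pose AA x y z := \sum_(i < n) \sum_(j < n) (xi i x * xi j y) *: X i (X j z).
pose BB x y z := \sum_(i < n) \sum_(j < n) (xi i x * xi j (X i y)) *: X j z.
pose CC x y z := \sum_(i < n) \sum_(j < n) \sum_(k < n) (xi i x * (a i k j * xi k y)) *: X j z.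
have E1 : forall x y z, N x (N y z) = AA x y z + BB x y z + CC x y z.
  move=> x y z; rewrite /AA /BB /CC -!big_split /=; apply: eq_bigr => i _.
  rewrite XS scaler_sumr -!big_split /=; apply: eq_bigr => j _.
  rewrite XZ xhE scalerDr scalerDl scalerDr !scalerA. idtac.
  by rewrite addrA mulr_sumr scaler_suml.
have NB : forall x y z, N (bracketA xi X x y) z = BB x y z - BB y x z.
  move=> x y z; rewrite /bracketA -/N NE.
  under eq_bigr do rewrite xiB !NE !xiS scalerBl.
  rewrite sumrB /BB; congr (_ - _); rewrite exchange_big; apply: eq_bigr => j _;
    rewrite scaler_suml; apply: eq_bigr => i _; by rewrite xiZ.
have AAd : forall x y z, AA x y z - AA y x z =
   \sum_(i < n) \sum_(j < n) \sum_(k < n) (xi i x * xi j y * (a j i k - a i j k)) *: X k z.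
  move=> x y z; rewrite /AA [in X in _ - X]exchange_big -sumrB; apply: eq_bigr => i _.
  rewrite -sumrB; apply: eq_bigr => j _; rewrite (mulrC (xi j y)) -scalerBr.
  rewrite -[X i (X j z) - _]/(cdo_comm (X i) (X j) z) Hcomm scaler_sumr.
  by apply: eq_bigr => k _; rewrite scalerA.
have CC1 : forall x y z, CC x y z =
   \sum_(i < n) \sum_(j < n) \sum_(k < n) (xi i x * xi j y * a i j k) *: X k z.
  move=> x y z; rewrite /CC; apply: eq_bigr => i _; rewrite exchange_big.
  apply: eq_bigr => j _; apply: eq_bigr => k _; congr (_ *: _); ring.
have CC2 : forall x y z, CC y x z =
   \sum_(i < n) \sum_(j < n) \sum_(k < n) (xi i x * xi j y * a j i k) *: X k z.
  move=> x y z; rewrite /CC; under eq_bigr do rewrite exchange_big.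
  rewrite exchange_big.
  apply: eq_bigr => i _; apply: eq_bigr => j _; apply: eq_bigr => k _; congr (_ *: _); ring.
have curv0 : forall x y z, curvature N (bracketA xi X) x y z = 0.
  move=> x y z; rewrite /curvature !E1 NB L1 AAd CC1 CC2 -!sumrB -big_split /=.
  apply: big1 => i _; rewrite -!sumrB -big_split /=.
  apply: big1 => j _; rewrite -!sumrB -big_split /=.
  apply: big1 => k _; rewrite -scalerBl -scalerDl.
  have -> : xi i x * xi j y * (a j i k - a i j k) + (xi i x * xi j y * a i j k - xi i x * xi j y * a j i k) = 0 by ring.
  by rewrite scale0r.
have NBr : forall x u v, N x (u - v) = N x u - N x v.
  by move=> x u v; rewrite !NE -sumrB; apply: eq_bigr => i _; rewrite XB scalerBr.
have NBl : forall x u v, N (u - v) x = N u x - N v x.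
  by move=> x u v; rewrite !NE -sumrB; apply: eq_bigr => i _; rewrite xiB scalerBl.
have NlinL : forall (f : R) x y z, N (f *: x + y) z = f *: N x z + N y z.
  move=> f x y z; rewrite !NE scaler_sumr -big_split; apply: eq_bigr => i _.
  by rewrite Hxi scalerDl scalerA.
have NlinR : forall (k : K) x y z, N z (k%:A *: x + y) = k%:A *: N z x + N z y.
  move=> k x y z; rewrite !NE scaler_sumr -big_split; apply: eq_bigr => i _.
  have [_ h _] := HX i; rewrite h scalerDr !scalerA; congr (_ + _); by rewrite mulrC.
have NZr : forall (f : R) x y, N x (f *: y) = f *: N x y + anchorA xi xh x f *: y.
  move=> f x y; rewrite !NE /anchorA scaler_sumr scaler_suml -big_split; apply: eq_bigr => i _.
  by rewrite XZ scalerDr !scalerA mulrC.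
split; first exact: curv0.
split.
  move=> y; split.
    move=> k f g; rewrite /anchorA scaler_sumr -big_split; apply: eq_bigr => i _.
    have [[h _] _ _] := HX i; by rewrite h mulrDr scalerAr.
  move=> f g; rewrite /anchorA !mulr_sumr -big_split; apply: eq_bigr => i _.
  have [[_ h] _ _] := HX i; by rewrite h mulrDr !(mulrCA (xi i y)).
split.
  move=> f g y z; rewrite /anchorA mulr_sumr -big_split; apply: eq_bigr => i _.
  by rewrite Hxi mulrDl mulrA.
split.
  move=> k x y z; rewrite /bracketA -/N NlinL NlinR scalerBr opprD !addrA.
  by rewrite [LHS](ACl (1*3*2*4)).
split.
  move=> k x y z; rewrite /bracketA -/N NlinL NlinR scalerBr opprD !addrA.
  by rewrite [LHS](ACl (1*3*2*4)).
split.
  by move=> x y; rewrite /bracketA opprB.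
split.
  move=> x y f; rewrite /bracketA -/N NZr -[f *: y]addr0 NlinL.
  have -> : N 0 x = 0 by rewrite NE big1 // => i _; rewrite xi0 scale0r.
  by rewrite addr0 scalerBr addrAC.
move=> x y z.
have c1 := curv0 x y z; have c2 := curv0 y z x; have c3 := curv0 z x y.
move: c1 c2 c3; rewrite /curvature /bracketA -/N !NBl => c1 c2 c3.
by rewrite ?NBr ?NBl L2 c1 c2 c3 !addr0.
Qed.
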